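(* Let $\gamma$ be a nonzero constant, and let $(H,P)$ be one of the following pairs of polynomials: (trigonometric) $H(u,u_1)=(\gamma+\gamma^{-1})(u_1-\gamma u)(\gamma u_1-u)+\tfrac14(1-\gamma^2)^2(1+\gamma^{-2})$, $P(u_{-1},u,u_1,u_2)=(\gamma u_2-u_{-1})(u_1-\gamma u)+(u_2-\gamma u_1)(\gamma u_{-1}-u)+\tfrac14(1-\gamma^2)^2(1+\gamma^{-2})$; (rational) $H(u,u_1)=(u_1-u)^2-2\gamma^2(u_1+u)+\gamma^4$, $P(u_{-1},u,u_1,u_2)=\tfrac12(u_2+u)(u_1+u_{-1})-u_2u-u_1u_{-1}-\gamma^2(u_{-1}+u+u_1+u_2)+3\gamma^4$. If $u(n,t)$ solves $$u_{,t}=\frac{H(u_{-1},u)H(u,u_1)(u_2-u_{-2})}{P(u_{-2},u_{-1},u,u_1)P(u_{-1},u,u_1,u_2)},$$ then $w(n,t)=\dfrac{H(u,u_1)}{P(u_{-1},u,u_1,u_2)}-1$ solves $$w_{,t}=(w+1)\Bigl(w_2\Bigl(\frac{1}{w_1}+1\Bigr)w-w\Bigl(\frac{1}{w_{-1}}+1\Bigr)w_{-2}+w_1-w_{-1}\Bigr).$$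
   Context: Here $u=u(n,t)$, $u_m=u(n+m,t)$, $w=w(n,t)$, $w_m=w(n+m,t)$, $n\in\mathbb Z$. *)

(* Defs.v *)
From Stdlib Require Import Reals ZArith.
From Coquelicot Require Import Coquelicot.
Open Scope R_scope.

Inductive HPcase := Trigonometric | Rational.

Definition Hpol (c : HPcase) (g u u1 : R) : R :=
  match c with
  | Trigonometric =>
      (g + / g) * (u1 - g * u) * (g * u1 - u)
        + / 4 * (1 - g ^ 2) ^ 2 * (1 + / g ^ 2)
  | Rational =>
      (u1 - u) ^ 2 - 2 * g ^ 2 * (u1 + u) + g ^ 4
  end.

Definition Ppol (c : HPcase) (g um1 u u1 u2 : R) : R :=
  match c with
  | Trigonometric =>
      (g * u2 - um1) * (u1 - g * u) + (u2 - g * u1) * (g * um1 - u)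
        + / 4 * (1 - g ^ 2) ^ 2 * (1 + / g ^ 2)
  | Rational =>
      / 2 * (u2 + u) * (u1 + um1) - u2 * u - u1 * um1
        - g ^ 2 * (um1 + u + u1 + u2) + 3 * g ^ 4
  end.

Definition sh (u : Z -> R -> R) (m : Z) (n : Z) (t : R) : R := u (n + m)%Z t.

Definition wOf (c : HPcase) (g : R) (u : Z -> R -> R) (n : Z) (t : R) : R :=
  Hpol c g (u n t) (sh u 1 n t)
    / Ppol c g (sh u (-1) n t) (u n t) (sh u 1 n t) (sh u 2 n t) - 1.

(* Main.v *)
Require Import Defs.
From Stdlib Require Import Reals ZArith Lia Lra.
From Coquelicot Require Import Coquelicot.
Open Scope R_scope.

Definition HuF (c : HPcase) (g u u1 : R) : R :=
  match c with
  | Trigonometric => (g + / g) * (- g * (g * u1 - u) - (u1 - g * u))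
  | Rational => -2 * (u1 - u) - 2 * g ^ 2 end.
Definition HvF (c : HPcase) (g u u1 : R) : R :=
  match c with
  | Trigonometric => (g + / g) * ((g * u1 - u) + g * (u1 - g * u))
  | Rational => 2 * (u1 - u) - 2 * g ^ 2 end.
Definition PaF (c : HPcase) (g a u u1 u2 : R) : R :=
  match c with
  | Trigonometric => - (u1 - g * u) + g * (u2 - g * u1)
  | Rational => / 2 * (u2 + u) - u1 - g ^ 2 end.
Definition PuF (c : HPcase) (g a u u1 u2 : R) : R :=
  match c with
  | Trigonometric => - g * (g * u2 - a) - (u2 - g * u1)
  | Rational => / 2 * (u1 + a) - u2 - g ^ 2 end.
Definition PvF (c : HPcase) (g a u u1 u2 : R) : R :=
  match c with
  | Trigonometric => (g * u2 - a) - g * (g * a - u)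
  | Rational => / 2 * (u2 + u) - a - g ^ 2 end.
Definition PwF (c : HPcase) (g a u u1 u2 : R) : R :=
  match c with
  | Trigonometric => g * (u1 - g * u) + (g * a - u)
  | Rational => / 2 * (u1 + a) - u - g ^ 2 end.
Definition AF (c : HPcase) (g x1 x2 x3 x4 x5 : R) : R :=
  match c with
  | Rational => x1*x3 - 2*x1*x4 + x1*x5 - 2*x1*g^2 - /2*x2*x3 + x2*x4 - /2*x2*x5
      + x2*g^2 - /2*x3*x4 + x3*g^2 + x4^2 - /2*x4*x5 - x4*g^2 + x5*g^2 - 2*g^4
  | Trigonometric => ((g^3+g)*(x1*x3 + x1*x5 + x2*x4 + x4^2) - (g^4+2*g^2+1)*x1*x4
      - g^2*(x2*x3+x2*x5+x3*x4+x4*x5)) / g end.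
Definition BF (c : HPcase) (g x2 x3 x4 x5 x6 : R) : R :=
  match c with
  | Rational => -/2*x2*x3 - /2*x2*x5 + x2*x6 + x2*g^2 + x3^2 - /2*x3*x4 + x3*x5
      - 2*x3*x6 - x3*g^2 - /2*x4*x5 + x4*x6 + x4*g^2 + x5*g^2 - 2*x6*g^2 - 2*g^4
  | Trigonometric => ((g^3+g)*(x2*x6 + x3^2 + x3*x5 + x4*x6) - (g^4+2*g^2+1)*x3*x6
      - g^2*(x2*x3 + x2*x5 + x3*x4 + x4*x5)) / g end.

Lemma N0id (c : HPcase) (g x0 x1 x2 x3 x4 x5 x6 x7 : R) : g <> 0 -> - PaF c g x2 x3 x4 x5 * (Hpol c g x1 x2) * (x4 - x0) * ((Hpol c g x2 x3) - (Ppol c g x1 x2 x3 x4)) + ((Hpol c g x3 x4) - (Ppol c g x2 x3 x4 x5)) * ((Hpol c g x1 x2) - (Ppol c g x0 x1 x2 x3)) * (Ppol c g x1 x2 x3 x4)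
  = (Ppol c g x0 x1 x2 x3) * ((Hpol c g x2 x3) - (Ppol c g x1 x2 x3 x4)) * AF c g x1 x2 x3 x4 x5.
Proof. intro Hg. destruct c; simpl; field; auto. Qed.

Lemma N7id (c : HPcase) (g x0 x1 x2 x3 x4 x5 x6 x7 : R) : g <> 0 -> PwF c g x2 x3 x4 x5 * (Hpol c g x5 x6) * (x7 - x3) * ((Hpol c g x4 x5) - (Ppol c g x3 x4 x5 x6)) + ((Hpol c g x5 x6) - (Ppol c g x4 x5 x6 x7)) * ((Hpol c g x3 x4) - (Ppol c g x2 x3 x4 x5)) * (Ppol c g x3 x4 x5 x6)
  = (Ppol c g x4 x5 x6 x7) * ((Hpol c g x4 x5) - (Ppol c g x3 x4 x5 x6)) * BF c g x2 x3 x4 x5 x6.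
Proof. intro Hg. destruct c; simpl; field; auto. Qed.

Lemma Rid (c : HPcase) (g x0 x1 x2 x3 x4 x5 x6 x7 : R) : g <> 0 -> HuF c g x3 x4 * (Hpol c g x2 x3) * (x5 - x1) * (Ppol c g x2 x3 x4 x5) * (Ppol c g x3 x4 x5 x6) + HvF c g x3 x4 * (Hpol c g x4 x5) * (x6 - x2) * (Ppol c g x1 x2 x3 x4) * (Ppol c g x2 x3 x4 x5)
  - PuF c g x2 x3 x4 x5 * (Hpol c g x2 x3) * (Hpol c g x3 x4) * (x5 - x1) * (Ppol c g x3 x4 x5 x6) - PvF c g x2 x3 x4 x5 * (Hpol c g x3 x4) * (Hpol c g x4 x5) * (x6 - x2) * (Ppol c g x1 x2 x3 x4)
  - ((Hpol c g x4 x5) - (Ppol c g x3 x4 x5 x6)) * (Ppol c g x1 x2 x3 x4) * (Ppol c g x2 x3 x4 x5) ^ 2 + ((Hpol c g x2 x3) - (Ppol c g x1 x2 x3 x4)) * (Ppol c g x2 x3 x4 x5) ^ 2 * (Ppol c g x3 x4 x5 x6)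
  + (Hpol c g x2 x3) * AF c g x1 x2 x3 x4 x5 * (Ppol c g x2 x3 x4 x5) * (Ppol c g x3 x4 x5 x6) - (Hpol c g x4 x5) * BF c g x2 x3 x4 x5 x6 * (Ppol c g x1 x2 x3 x4) * (Ppol c g x2 x3 x4 x5) = 0.
Proof. intro Hg. destruct c; simpl; field; auto. Qed.

Lemma combine (x0 x1 x2 x3 x4 x5 x6 x7 H1 H2 H3 H4 H5 P1 P2 P3 P4 P5 Hu Hv Pa Pu Pv Pw A B : R) :
  P1 <> 0 -> P2 <> 0 -> P3 <> 0 -> P4 <> 0 -> P5 <> 0 ->
  H2 / P2 - 1 <> 0 -> H4 / P4 - 1 <> 0 ->
  - Pa * H1 * (x4 - x0) * (H2 - P2) + (H3 - P3) * (H1 - P1) * P2 = P1 * (H2 - P2) * A ->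
  Pw * H5 * (x7 - x3) * (H4 - P4) + (H5 - P5) * (H3 - P3) * P4 = P5 * (H4 - P4) * B ->
  Hu * H2 * (x5 - x1) * P3 * P4 + Hv * H4 * (x6 - x2) * P2 * P3
  - Pu * H2 * H3 * (x5 - x1) * P4 - Pv * H3 * H4 * (x6 - x2) * P2
  - (H4 - P4) * P2 * P3 ^ 2 + (H2 - P2) * P3 ^ 2 * P4
  + H2 * A * P3 * P4 - H4 * B * P2 * P3 = 0 ->
  let d2 := H1*H2*(x4-x0)/(P1*P2) in
  let d3 := H2*H3*(x5-x1)/(P2*P3) in
  let d4 := H3*H4*(x6-x2)/(P3*P4) in
  let d5 := H4*H5*(x7-x3)/(P4*P5) in
  ((Hu*d3 + Hv*d4)*P3 - H3*(Pa*d2+Pu*d3+Pv*d4+Pw*d5))/P3^2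
  = (H3/P3 - 1 + 1) * ((H5/P5-1)*(/(H4/P4-1)+1)*(H3/P3-1) - (H3/P3-1)*(/(H2/P2-1)+1)*(H1/P1-1)
      + (H4/P4-1) - (H2/P2-1)).
Proof.
intros n1 n2 n3 n4 n5 w2 w4 E0 E7 ER d2 d3 d4 d5.
assert (q2 : H2 - P2 <> 0). { intro h; apply w2. field_simplify; auto. rewrite h. field. auto. }
assert (q4 : H4 - P4 <> 0). { intro h; apply w4. field_simplify; auto. rewrite h. field. auto. }
unfold d2, d3, d4, d5.
apply Rminus_diag_uniq.
transitivity (H3/P3 * ( H2/(P1*P2*P3*(H2-P2)) * ((- Pa * H1 * (x4 - x0) * (H2 - P2) + (H3 - P3) * (H1 - P1) * P2) - P1 * (H2 - P2) * A)
  - H4/(P3*P4*P5*(H4-P4)) * ((Pw * H5 * (x7 - x3) * (H4 - P4) + (H5 - P5) * (H3 - P3) * P4) - P5 * (H4 - P4) * B)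
  + (Hu * H2 * (x5 - x1) * P3 * P4 + Hv * H4 * (x6 - x2) * P2 * P3
  - Pu * H2 * H3 * (x5 - x1) * P4 - Pv * H3 * H4 * (x6 - x2) * P2
  - (H4 - P4) * P2 * P3 ^ 2 + (H2 - P2) * P3 ^ 2 * P4
  + H2 * A * P3 * P4 - H4 * B * P2 * P3) / (P2 * P3^2 * P4))).
- field. repeat split; auto.
- rewrite E0, E7, ER. field. repeat split; auto.
Qed.

Lemma derW (c : HPcase) (g : R) (fm f0 f1 f2 : R -> R) (t dm d0 d1 d2 l : R) :
  g <> 0 -> is_derive fm t dm -> is_derive f0 t d0 -> is_derive f1 t d1 -> is_derive f2 t d2 ->
  Ppol c g (fm t) (f0 t) (f1 t) (f2 t) <> 0 ->
  l = ((HuF c g (f0 t) (f1 t) * d0 + HvF c g (f0 t) (f1 t) * d1) * Ppol c g (fm t) (f0 t) (f1 t) (f2 t)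
       - Hpol c g (f0 t) (f1 t) * (PaF c g (fm t) (f0 t) (f1 t) (f2 t) * dm + PuF c g (fm t) (f0 t) (f1 t) (f2 t) * d0
          + PvF c g (fm t) (f0 t) (f1 t) (f2 t) * d1 + PwF c g (fm t) (f0 t) (f1 t) (f2 t) * d2))
      / Ppol c g (fm t) (f0 t) (f1 t) (f2 t) ^ 2 ->
  is_derive (fun t => Hpol c g (f0 t) (f1 t) / Ppol c g (fm t) (f0 t) (f1 t) (f2 t) - 1) t l.
Proof.
intros Hg Dm D0 D1 D2 HP ->.
assert (Em : ex_derive fm t) by (eexists; eauto).
assert (E0 : ex_derive f0 t) by (eexists; eauto).
assert (E1 : ex_derive f1 t) by (eexists; eauto).
assert (E2 : ex_derive f2 t) by (eexists; eauto).
apply is_derive_unique in Dm. apply is_derive_unique in D0.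
apply is_derive_unique in D1. apply is_derive_unique in D2.
change (Derive (fun x => fm x) t = dm) in Dm. change (Derive (fun x => f0 x) t = d0) in D0.
change (Derive (fun x => f1 x) t = d1) in D1. change (Derive (fun x => f2 x) t = d2) in D2.
destruct c; unfold Hpol, Ppol, HuF, HvF, PaF, PuF, PvF, PwF in *;
auto_derive; try (repeat split; auto; intro HH; apply HP; rewrite <- HH; field; auto; fail);
rewrite Dm, D0, D1, D2; field; repeat split; auto;
  intro HH; apply HP;
  first [ apply (Rmult_eq_reg_l (4 * g ^ 2)); [rewrite Rmult_0_r, <- HH; field; auto | apply Rmult_integral_contrapositive_currified; [lra | apply pow_nonzero; auto]]
        | apply (Rmult_eq_reg_l 2); [rewrite Rmult_0_r, <- HH; field | lra] ].
Qed.

Ltac normZ n :=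
  repeat match goal with
  | |- context[(n + ?a + ?b)%Z] =>
      let k := eval compute in (a+b)%Z in replace (n + a + b)%Z with (n + k)%Z by lia
  | |- context[(n - ?a + ?b)%Z] =>
      let k := eval compute in (b-a)%Z in replace (n - a + b)%Z with (n + k)%Z by lia
  | |- context[(n - ?a)%Z] =>
      let k := eval compute in (-a)%Z in replace (n - a)%Z with (n + k)%Z by lia
  | H : context[(n + ?a + ?b)%Z] |- _ =>
      let k := eval compute in (a+b)%Z in replace (n + a + b)%Z with (n + k)%Z in H by lia
  | H : context[(n - ?a + ?b)%Z] |- _ =>
      let k := eval compute in (b-a)%Z in replace (n - a + b)%Z with (n + k)%Z in H by lia
  | H : context[(n - ?a)%Z] |- _ =>
      let k := eval compute in (-a)%Z in replace (n - a)%Z with (n + k)%Z in H by lia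
  | |- context[(n + 0)%Z] => rewrite Z.add_0_r
  | H : context[(n + 0)%Z] |- _ => rewrite Z.add_0_r in H
  end.

Theorem mainTheorem9 (c : HPcase) (g : R) (u : Z -> R -> R) :
  g <> 0 ->
  (* the denominators P(u_{-1},u,u_1,u_2) never vanish (so the u-equation makes sense) *)
  (forall (n : Z) (t : R),
      Ppol c g (sh u (-1) n t) (u n t) (sh u 1 n t) (sh u 2 n t) <> 0) ->
  (* u solves the lattice equation *)
  (forall (n : Z) (t : R),
      is_derive (u n) t
        (Hpol c g (sh u (-1) n t) (u n t) * Hpol c g (u n t) (sh u 1 n t)
           * (sh u 2 n t - sh u (-2) n t)
         / (Ppol c g (sh u (-2) n t) (sh u (-1) n t) (u n t) (sh u 1 n t)
            * Ppol c g (sh u (-1) n t) (u n t) (sh u 1 n t) (sh u 2 n t)))) ->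
  (* then w solves its equation wherever its right-hand side is defined *)
  forall (n : Z) (t : R),
    wOf c g u (n + 1)%Z t <> 0 ->
    wOf c g u (n - 1)%Z t <> 0 ->
    is_derive (wOf c g u n) t
      ((wOf c g u n t + 1) *
         (wOf c g u (n + 2)%Z t * (/ wOf c g u (n + 1)%Z t + 1) * wOf c g u n t
          - wOf c g u n t * (/ wOf c g u (n - 1)%Z t + 1) * wOf c g u (n - 2)%Z t
          + wOf c g u (n + 1)%Z t - wOf c g u (n - 1)%Z t)).
Proof.
intros Hg HP Hd n t Hw1 Hwm1.
assert (Dm1 := Hd (n + -1)%Z t).
assert (D0 := Hd n t).
assert (D1 := Hd (n + 1)%Z t).
assert (D2 := Hd (n + 2)%Z t).
assert (Pm2 := HP (n + -2)%Z t).
assert (Pm1 := HP (n + -1)%Z t).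
assert (P0 := HP n t).
assert (P1 := HP (n + 1)%Z t).
assert (P2 := HP (n + 2)%Z t).
clear HP Hd.
unfold wOf, sh in *.
normZ n.
eapply (derW c g (u (n + -1)%Z) (u n) (u (n+1)%Z) (u (n+2)%Z)); eauto.
symmetry.
apply (combine (u (n + -3)%Z t) (u (n + -2)%Z t) (u (n + -1)%Z t) (u n t) (u (n + 1)%Z t) (u (n + 2)%Z t) (u (n + 3)%Z t) (u (n + 4)%Z t))
  with (A := AF c g (u (n + -2)%Z t) (u (n + -1)%Z t) (u n t) (u (n + 1)%Z t) (u (n + 2)%Z t))
       (B := BF c g (u (n + -1)%Z t) (u n t) (u (n+1)%Z t) (u (n+2)%Z t) (u (n+3)%Z t)); auto.
- apply N0id; auto.
- apply N7id; auto.
- apply (Rid c g (u (n + -3)%Z t)); auto.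
Qed.
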